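(* For $\mathbf{x}\in\mathcal{B}^\Sigma_{e,n}$, $\mathbf{y}\in\mathcal{B}^\Sigma_{d,m}$ and $\mathbf{v}\in\mathcal{B}^\Sigma_{d,n}$, we have $\Delta(\mathbf{y}\cdot\mathbf{v})=\Delta(\mathbf{y})\cdot\Delta(\mathbf{v})$ and $\Delta(\mathbf{x}*\mathbf{v})=\Delta(\mathbf{x})*\Delta(\mathbf{v})$.
   Context: Let $\mathbf{k}$ be a field of characteristic $0$ and $B=\bigoplus_{d\ge0}B_d$ a commutative graded $\mathbf{k}$-algebra with $B_0=\mathbf{k}$, generated by $B_1$, $\dim B_1<\infty$. Let $\mathcal{B}^\Sigma=\bigoplus_{n,d}\mathcal{B}^\Sigma_{d,n}$ with $\mathcal{B}^\Sigma_{d,n}=(B_d^{\otimes n})^{\Sigma_n}$ ($\Sigma_n$ permuting factors). Product $\cdot$: for $f\in\mathcal{B}^\Sigma_{d,n}$, $g\in\mathcal{B}^\Sigma_{d,m}$, $f\cdot g=\sum_\sigma f\cdot_\sigma g$ where $\sigma$ runs over subsets $\{i_1<\cdots<i_n\}\subseteq[n+m]$ and $f\cdot_\sigma g$ places the factors of $f$ in positions $i_1,\dots,i_n$ and those of $g$ in the complementary positions in order (zero between different $d$). Product $*:\mathcal{B}^\Sigma_{d,n}\otimes\mathcal{B}^\Sigma_{e,n}\to\mathcal{B}^\Sigma_{d+e,n}$ is factorwise multiplication $(u_1\otimes\cdots\otimes u_n)*(v_1\otimes\cdots\otimes v_n)=u_1v_1\otimes\cdots\otimes u_nv_n$ (zero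 for different $n$). For fixed $d$, $\bigoplus_n\mathcal{B}^\Sigma_{d,n}$ is a free divided power algebra under $\cdot$ generated by $\mathcal{B}^\Sigma_{d,1}=B_d$; $\Delta:\mathcal{B}^\Sigma\to\mathcal{B}^\Sigma\otimes\mathcal{B}^\Sigma$ is the unique $\cdot$-algebra homomorphism with $\Delta(w)=1\otimes w+w\otimes1$ for $w\in\mathcal{B}^\Sigma_{d,1}$ (all $d$). The products $\cdot$ and $*$ are extended to $\mathcal{B}^\Sigma\otimes\mathcal{B}^\Sigma$ componentwise: $(a\otimes b)\cdot(c\otimes e)=(a\cdot c)\otimes(b\cdot e)$ and $(a\otimes b)*(c\otimes e)=(a*c)\otimes(b*e)$. *)

(* Defs.v *)
From HB Require Import structures.
From mathcomp Require Import all_boot all_order all_algebra.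
Set Implicit Arguments. Unset Strict Implicit. Unset Printing Implicit Defensive.
Import Order.TTheory GRing.Theory.
Local Open Scope ring_scope.

(* The graded algebra B, presented by homogeneous bases and structure        *)
(* constants: B_d has basis indexed by 'I_(gdim d) (each B_d is finite-      *)
(* dimensional since B is generated by the finite-dimensional B_1), and      *)
(* b_i * b_j = \sum_l gmul d e i j l b_l  for b_i in B_d, b_j in B_e.        *)
(* An element of B_d is its coordinate function 'I_(gdim d) -> k.           *)
Record gradedAlg (k : fieldType) := GradedAlg {
  gdim : nat -> nat;
  gmul : forall d e, 'I_(gdim d) -> 'I_(gdim e) -> 'I_(gdim (d + e)%N) -> k
}.

Section GradedAlgDefs.
Variables (k : fieldType) (B : gradedAlg k).

Local Notation I d := ('I_(gdim B d)).

Definition gmulv d e (u : I d -> k) (v : I e -> k) : I (d + e)%N -> k :=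
  fun l => \sum_(i : I d) \sum_(j : I e) u i * v j * @gmul _ B _ _ i j l.

Definition std_graded : Prop :=
  [/\
      (forall d e f (u : I d -> k) (v : I e -> k) (w : I f -> k) (l : I (d + e + f)%N),
          gmulv (gmulv u v) w l
          = gmulv u (gmulv v w) (cast_ord (congr1 (gdim B) (esym (addnA d e f))) l)),
      (forall d e (u : I d -> k) (v : I e -> k) (l : I (d + e)%N),
          gmulv u v l = gmulv v u (cast_ord (congr1 (gdim B) (addnC d e)) l)),
      gdim B 0%N = 1%N /\
      (exists one : I 0%N -> k, forall e (v : I e -> k) (l : I e), gmulv one v l = v l)
    & (forall d (z : I d.+1 -> k), exists a : I 1%N -> I d -> k,
          forall l : I d.+1, z l = \sum_(i : I 1%N) \sum_(j : I d) a i j * @gmul _ B _ _ i j l)].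

(* Tensor algebra over B_d in coordinates: an element of                    *)
(* \bigoplus_n B_d^{\otimes n} is a finitely supported function on words     *)
(* (sequences of basis indices of B_d); the word w of length n is the       *)
(* coordinate of b_(w_1) (x) ... (x) b_(w_n).  Elements of B_d^{(x) n} are    *)
(* those supported on words of length n, and Sigma_n-invariance means       *)
(* invariance under permutations of the word.                               *)
Definition word d := seq (I d).
Definition sfun d := word d -> k.
Definition sfun2 d := word d -> word d -> k.  (* element of the tensor square *)

Definition finsupp d (x : sfun d) : Prop :=
  exists N : nat, forall w : word d, (N <= size w)%N -> x w = 0.
Definition symm d (x : sfun d) : Prop :=
  forall w w' : word d, perm_eq w w' -> x w = x w'.

Definition inBS d (x : sfun d) : Prop := finsupp x /\ symm x.
Definition inBSn d (n : nat) (x : sfun d) : Prop :=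
  symm x /\ forall w : word d, size w != n -> x w = 0.

Definition finsupp2 d (X : sfun2 d) : Prop :=
  exists N : nat, forall w1 w2 : word d, (N <= size w1 + size w2)%N -> X w1 w2 = 0.
Definition symm2 d (X : sfun2 d) : Prop :=
  forall w1 w1' w2 w2' : word d, perm_eq w1 w1' -> perm_eq w2 w2' ->
    X w1 w2 = X w1' w2'.
Definition inBS2 d (X : sfun2 d) : Prop := finsupp2 X /\ symm2 X.

Definition pos_mask N (S : {set 'I_N}) : bitseq := [seq i \in S | i <- enum 'I_N].

(* the product "." : sum over subsets S of positions; x gets the positions
   in S (in increasing order), y the complementary positions *)
Definition dotp d (x y : sfun d) : sfun d :=
  fun w => \sum_(S : {set 'I_(size w)})
             x (mask (pos_mask S) w) * y (mask (pos_mask (~: S)) w).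

Definition dotp2 d (X Y : sfun2 d) : sfun2 d :=
  fun w1 w2 => \sum_(S1 : {set 'I_(size w1)}) \sum_(S2 : {set 'I_(size w2)})
     X (mask (pos_mask S1) w1) (mask (pos_mask S2) w2)
     * Y (mask (pos_mask (~: S1)) w1) (mask (pos_mask (~: S2)) w2).

(* coordinate of (b_(u_1) b_(v_1)) (x) ... (x) (b_(u_n) b_(v_n)) on the word w *)
Definition coefprod e d (u : word e) (v : word d) (w : word (e + d)%N) : k :=
  \prod_(t <- zip (zip u v) w) @gmul _ B _ _ t.1.1 t.1.2 t.2.

(* the product "*" : factorwise multiplication (zero for different lengths) *)
Definition star e d (x : sfun e) (v : sfun d) : sfun (e + d)%N :=
  fun w => \sum_(u : (size w).-tuple (I e)) \sum_(u' : (size w).-tuple (I d))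
             x u * v u' * coefprod u u' w.

Definition star2 e d (X : sfun2 e) (Y : sfun2 d) : sfun2 (e + d)%N :=
  fun w1 w2 =>
    \sum_(u1 : (size w1).-tuple (I e)) \sum_(u1' : (size w1).-tuple (I d))
    \sum_(u2 : (size w2).-tuple (I e)) \sum_(u2' : (size w2).-tuple (I d))
      X u1 u2 * Y u1' u2' * coefprod u1 u1' w1 * coefprod u2 u2' w2.

Definition one d : sfun d := fun w => (w == [::])%:R.
Definition tens d (x y : sfun d) : sfun2 d := fun w1 w2 => x w1 * y w2.

(* These
   properties determine Delta uniquely (char 0, free divided power algebra). *)
Definition is_Delta (D : forall d, sfun d -> sfun2 d) : Prop :=
  forall d,
  [/\ (forall x : sfun d, inBS x -> inBS2 (D d x)),
      (forall (a : k) (x y : sfun d), inBS x -> inBS y ->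
         forall w1 w2, D d (fun w => a * x w + y w) w1 w2
                       = a * D d x w1 w2 + D d y w1 w2),
      (forall x y : sfun d, inBS x -> inBS y ->
         forall w1 w2, D d (dotp x y) w1 w2 = dotp2 (D d x) (D d y) w1 w2),
      (forall w1 w2, D d (@one d) w1 w2 = tens (@one d) (@one d) w1 w2)
    & (forall x : sfun d, inBSn 1%N x ->
         forall w1 w2, D d x w1 w2 = tens (@one d) x w1 w2 + tens x (@one d) w1 w2)].

End GradedAlgDefs.

(* Main.v *)
Require Import Defs.
From HB Require Import structures.
From mathcomp Require Import all_boot all_order all_algebra.
From mathcomp Require Import fingroup perm.
From Stdlib Require Import FunctionalExtensionality.
Set Implicit Arguments. Unset Strict Implicit. Unset Printing Implicit Defensive.
Import GRing.Theory.
Local Open Scope ring_scope.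

Section Masks.
Variable T : eqType.

Definition LS N (S : {set 'I_N}) := [seq i <- enum 'I_N | i \in S].

Lemma maskE (w : seq T) (S : {set 'I_(size w)}) :
  mask (pos_mask S) w = [seq tnth (in_tuple w) i | i <- LS S].
Proof.
rewrite /pos_mask /LS.
transitivity (mask [seq i \in S | i <- enum 'I_(size w)]
   [seq tnth (in_tuple w) i | i <- enum 'I_(size w)]); first by rewrite map_tnth_enum.
by rewrite -map_mask -filter_mask.
Qed.

Lemma LS1 N (j : 'I_N) : LS [set j] = [:: j].
Proof.
rewrite /LS -(filter_pred1_uniq (enum_uniq 'I_N) (mem_enum _ j)).
by apply: eq_filter => i; rewrite in_set1.
Qed.

Lemma LS0 N : LS (set0 : {set 'I_N}) = [::].
Proof. by rewrite /LS -(filter_pred0 (enum 'I_N)); apply: eq_filter => i; rewrite in_set0. Qed.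

Lemma LS_eq1 N (S : {set 'I_N}) (j : 'I_N) : LS S = [:: j] -> S = [set j].
Proof.
move=> H; apply/setP => i; rewrite in_set1.
have := mem_filter (mem S) i (enum 'I_N); rewrite -/(LS S) H mem_enum andbT.
by rewrite inE => ->.
Qed.

Lemma LS_nil N (S : {set 'I_N}) : LS S = [::] -> S = set0.
Proof.
move=> H; apply/setP => i; rewrite in_set0.
have := mem_filter (mem S) i (enum 'I_N); rewrite -/(LS S) H mem_enum andbT.
by rewrite in_nil => ->.
Qed.

Lemma mask_split (w : seq T) (S : {set 'I_(size w)}) :
  perm_eq w (mask (pos_mask S) w ++ mask (pos_mask (~: S)) w).
Proof.
rewrite !maskE /LS -map_cat.
have -> : [seq i <- enum 'I_(size w) | i \in ~: S] = [seq i <- enum 'I_(size w) | predC (mem S) i].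
  by apply: eq_filter => i; rewrite in_setC.
rewrite perm_sym.
have := perm_map (tnth (in_tuple w)) (etrans (perm_filterC (mem S) (enum 'I_(size w)) _) (perm_refl _)).
by rewrite map_tnth_enum.
Qed.

Lemma mask_setC0 (w : seq T) : mask (pos_mask (~: (set0 : {set 'I_(size w)}))) w = w.
Proof.
rewrite maskE /LS.
have -> : [seq i <- enum 'I_(size w) | i \in ~: set0] = enum 'I_(size w).
  by apply/all_filterP/allP => i _; rewrite setC0 in_setT.
by rewrite map_tnth_enum.
Qed.

End Masks.
Section K.
Variables (k : fieldType) (B : gradedAlg k) (d : nat).
Local Notation I := ('I_(gdim B d)).
Local Notation wd := (word B d).

Definition delta (a : I) : sfun B d := fun w => (w == [:: a])%:R.

Lemma PR (g : sfun B d) (a : I) (s u : wd) : symm g -> a \in s -> perm_eq (a :: u) s ->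
  g u = g (rem a s).
Proof.
move=> Hg As Hp; apply: Hg; rewrite -(perm_cons a).
by apply: perm_trans Hp _; apply: perm_to_rem.
Qed.

Lemma cnt_tnth (a : I) (w : wd) :
  \sum_(i < size w) (tnth (in_tuple w) i == a)%:R = (count_mem a w)%:R :> k.
Proof.
rewrite -(big_tnth 0 +%R w xpredT (fun x => (x == a)%:R)) -natr_sum; congr (_%:R).
rewrite -sum1_count big_mkcond /=.
by rewrite [RHS]big_mkcond; apply: eq_bigr => x _; case: (x == a).
Qed.

Lemma K1 (g : sfun B d) (a : I) (w : wd) : symm g ->
  \sum_(S : {set 'I_(size w)}) (mask (pos_mask S) w == [:: a])%:R * g (mask (pos_mask (~:S)) w)
  = (count_mem a w)%:R * g (rem a w).
Proof.
move=> Hg.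
set t := in_tuple w.
have E : forall S : {set 'I_(size w)}, (mask (pos_mask S) w == [:: a])%:R
   = \sum_(i < size w) (S == [set i])%:R * (tnth t i == a)%:R :> k.
  move=> S; rewrite maskE; case H: (LS S) => [|j [|j' l]] /=.
  - rewrite big1 // => i _; rewrite (LS_nil H).
    case: eqP => [/setP /(_ i)|]; last by rewrite mul0r.
    by rewrite in_set0 in_set1 eqxx.
  - rewrite (LS_eq1 H) (bigD1 j) //= eqxx mul1r big1 ?addr0.
      by rewrite eqseq_cons andbT.
    move=> i Hij; case: eqP => [/setP /(_ i)|]; last by rewrite mul0r.
    by rewrite !in_set1 eqxx (negbTE Hij).
  - rewrite big1; first by case: eqP.
    move=> i _; case: eqP => [HS|]; last by rewrite mul0r.
    by move: H; rewrite HS LS1.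
transitivity (\sum_(S : {set 'I_(size w)}) \sum_(i < size w)
    (S == [set i])%:R * ((tnth t i == a)%:R * g (mask (pos_mask (~:S)) w))).
  by apply: eq_bigr => S _; rewrite E mulr_suml; apply: eq_bigr => i _; rewrite mulrA.
rewrite exchange_big /=.
transitivity (\sum_(i < size w) (tnth t i == a)%:R * g (rem a w)).
  apply: eq_bigr => i _.
  rewrite (bigD1 [set i]) //= eqxx mul1r big1 ?addr0; last first.
    by move=> S /negbTE ->; rewrite mul0r.
  case: eqP => Hi; last by rewrite !mul0r.
  rewrite !mul1r; apply: PR => //.
    by rewrite -Hi; apply: mem_tnth.
  have := mask_split [set i]; rewrite perm_sym maskE LS1 /= Hi.
  by [].
by rewrite -mulr_suml cnt_tnth.
Qed.

End K.
Section K2.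
Variables (k : fieldType) (B : gradedAlg k) (d : nat).
Local Notation I := ('I_(gdim B d)).
Local Notation wd := (word B d).
Local Notation oneD := (@Defs.one k B d).

Lemma ONE (w : wd) (G : {set 'I_(size w)} -> k) :
  \sum_(S : {set 'I_(size w)}) oneD (mask (pos_mask S) w) * G S = G set0.
Proof.
rewrite (bigD1 set0) //= big1 ?addr0.
  by rewrite /Defs.one maskE LS0 eqxx mul1r.
move=> S HS; rewrite /Defs.one maskE; case H: (LS S) => [|j l] /=.
  by rewrite (LS_nil H) eqxx in HS.
by rewrite mul0r.
Qed.

Lemma dotp_delta (z : sfun B d) (a : I) (w : wd) : symm z ->
  dotp (delta a) z w = (count_mem a w)%:R * z (rem a w).
Proof. by move=> Hz; rewrite /dotp /delta K1. Qed.

Lemma K2 (z : sfun B d) (a : I) (w1 w2 : wd) : symm z ->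
  dotp2 (fun u1 u2 => tens oneD (delta a) u1 u2 + tens (delta a) oneD u1 u2)
        (fun u1 u2 => z (u1 ++ u2)) w1 w2
  = (count_mem a (w1 ++ w2))%:R * z (rem a (w1 ++ w2)).
Proof.
move=> Hz; rewrite /dotp2 /tens.
under eq_bigr => S1 _ do under eq_bigr => S2 _ do rewrite mulrDl.
under eq_bigr => S1 _ do rewrite big_split /=.
rewrite big_split /=.
have -> : forall (F : {set 'I_(size w1)} -> {set 'I_(size w2)} -> k),
   \sum_S1 \sum_S2 oneD (mask (pos_mask S1) w1) * F S1 S2 * z (mask (pos_mask (~: S1)) w1 ++ mask (pos_mask (~: S2)) w2)
   = \sum_S2 F set0 S2 * z (w1 ++ mask (pos_mask (~: S2)) w2).
  move=> F.
  transitivity (\sum_S1 oneD (mask (pos_mask S1) w1) * \sum_S2 F S1 S2 * z (mask (pos_mask (~: S1)) w1 ++ mask (pos_mask (~: S2)) w2)).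
    apply: eq_bigr => S1 _; rewrite mulr_sumr; apply: eq_bigr => S2 _; by rewrite mulrA.
  by rewrite ONE mask_setC0.
rewrite exchange_big /=.
have -> : \sum_(S2 : {set 'I_(size w2)}) \sum_(S1 : {set 'I_(size w1)}) delta a (mask (pos_mask S1) w1) * oneD (mask (pos_mask S2) w2) *
        z (mask (pos_mask (~: S1)) w1 ++ mask (pos_mask (~: S2)) w2)
   = \sum_(S1 : {set 'I_(size w1)}) delta a (mask (pos_mask S1) w1) * z (mask (pos_mask (~: S1)) w1 ++ w2).
  transitivity (\sum_(S2 : {set 'I_(size w2)}) oneD (mask (pos_mask S2) w2) * \sum_(S1 : {set 'I_(size w1)}) delta a (mask (pos_mask S1) w1) * z (mask (pos_mask (~: S1)) w1 ++ mask (pos_mask (~: S2)) w2)).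
    apply: eq_bigr => S2 _; rewrite mulr_sumr; apply: eq_bigr => S1 _; by rewrite mulrAC mulrC.
  by rewrite ONE mask_setC0.
rewrite (_ : \sum_S2 _ = (count_mem a w2)%:R * z (w1 ++ rem a w2)); last first.
  apply: (@K1 _ _ _ (fun u => z (w1 ++ u)) a w2) => u u' Hu; apply: Hz; by rewrite perm_cat2l.
rewrite (_ : \sum_S1 _ = (count_mem a w1)%:R * z (rem a w1 ++ w2)); last first.
  apply: (@K1 _ _ _ (fun u => z (u ++ w2)) a w1) => u u' Hu; apply: Hz; by rewrite perm_cat2r.
rewrite count_cat natrD mulrDl addrC.
have Hin : forall u, a \in w1 ++ w2 -> perm_eq (a :: u) (w1 ++ w2) -> z u = z (rem a (w1 ++ w2)).
  by move=> u H1 H2; apply: PR.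
congr (_ + _).
  case: (boolP (a \in w1)) => H1; last by rewrite (count_memPn H1) !mul0r.
  congr (_ * _); apply: Hin => //; first by rewrite mem_cat H1.
  by rewrite -cat_cons perm_cat2r perm_sym perm_to_rem.
case: (boolP (a \in w2)) => H2; last by rewrite (count_memPn H2) !mul0r.
congr (_ * _); apply: Hin => //; first by rewrite mem_cat H2 orbT.
rewrite -cat1s perm_catCA perm_cat2l /= perm_sym perm_to_rem //.
Qed.
End K2.
Section U.
Variables (k : fieldType) (char0 : [pchar k] =i pred0) (B : gradedAlg k)
  (D : forall d, sfun B d -> sfun2 B d) (HD : is_Delta D) (d : nat).
Local Notation I := ('I_(gdim B d)).
Local Notation wd := (word B d).
Local Notation DD := (@D d).
Local Notation oneD := (@Defs.one k B d).

Lemma inBSn_inBS n (x : sfun B d) : inBSn n x -> inBS x.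
Proof.
case=> Hs Hz; split=> //; exists n.+1 => w Hw; apply: Hz.
by rewrite neq_ltn Hw orbT.
Qed.

Lemma inBS0 : inBS (fun _ : wd => 0 : k).
Proof. by split=> //; exists 0%N. Qed.

Lemma linE (a : k) (x y f : sfun B d) : inBS x -> inBS y ->
  (forall w, f w = a * x w + y w) ->
  forall w1 w2, DD f w1 w2 = a * DD x w1 w2 + DD y w1 w2.
Proof.
move=> Hx Hy Hf; have -> : f = fun w => a * x w + y w by apply: functional_extensionality.
by case: (HD d) => _ H2 _ _ _; apply: H2.
Qed.

Lemma lin0 w1 w2 : DD (fun _ => 0) w1 w2 = 0.
Proof.
have H := @linE 1 (fun _ => 0) (fun _ => 0) (fun _ => 0) inBS0 inBS0 (fun w => ltac:(by rewrite mul1r addr0)) w1 w2.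
rewrite mul1r in H.
by apply: (addrI (DD (fun _ => 0) w1 w2)); rewrite addr0 -H.
Qed.

Lemma lin_sum (J : Type) (s : seq J) (c : k) (f : J -> sfun B d) :
  (forall i, inBS (f i)) ->
  inBS (fun w => \sum_(i <- s) c * f i w) /\
  forall w1 w2, DD (fun w => \sum_(i <- s) c * f i w) w1 w2 = \sum_(i <- s) c * DD (f i) w1 w2.
Proof.
move=> Hf; elim: s => [|i s [IH1 IH2]].
  split.
    by split; [exists 0%N => w _; rewrite big_nil | move=> w w' _; rewrite !big_nil].
  move=> w1 w2; rewrite big_nil.
  have -> : (fun w => \sum_(i <- [::]) c * f i w) = fun _ => 0.
    by apply: functional_extensionality => w; rewrite big_nil.
  exact: lin0.
split.
  case: IH1 => [[N HN] Hs]; case: (Hf i) => [[M HM] Hsi]; split.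
    exists (maxn N M) => w Hw; rewrite big_cons HN ?HM ?mulr0 ?addr0 //.
      by apply: leq_trans Hw; rewrite leq_maxr.
    by apply: leq_trans Hw; rewrite leq_maxl.
  move=> w w' Hp; rewrite !big_cons (Hsi _ _ Hp).
  by have := Hs _ _ Hp => /= ->.
move=> w1 w2; rewrite big_cons -IH2.
by apply: linE => // w; rewrite big_cons.
Qed.

Lemma inBS_one : inBS oneD.
Proof.
split; first by exists 1%N => -[|x w].
move=> w w' Hp; rewrite /Defs.one -!size_eq0 (perm_size Hp) //.
Qed.

Lemma inBSn_delta (a : I) : inBSn 1 (delta a).
Proof.
split.
  move=> w w' Hp; rewrite /delta.
  suff -> : (w == [:: a]) = (w' == [:: a]) by [].
  apply/idP/idP => /eqP H0; apply/eqP.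
    by rewrite H0 perm_sym in Hp; rewrite (perm_small_eq _ Hp).
  by rewrite H0 in Hp; rewrite (perm_small_eq _ Hp).
move=> w Hw; rewrite /delta; case: eqP => // Hw'.
by rewrite Hw' in Hw.
Qed.

Lemma inBSn_dotp n (z : sfun B d) (a : I) : inBSn n z -> inBSn n.+1 (dotp (delta a) z).
Proof.
case=> Hs Hz; split.
  move=> w w' Hp; rewrite !dotp_delta //.
  case: (boolP (a \in w)) => Ha; last first.
    have Ha' : a \notin w' by rewrite -(perm_mem Hp).
    by rewrite (count_memPn Ha) (count_memPn Ha') !mul0r.
  rewrite (seq.permP Hp).
  congr (_ * _); apply: Hs; rewrite -(perm_cons a).
  apply: (@perm_trans _ w); first by rewrite perm_sym perm_to_rem.
  apply: (@perm_trans _ w') => //; apply: perm_to_rem; by rewrite -(perm_mem Hp).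
move=> w Hw; rewrite dotp_delta //.
case: (boolP (a \in w)) => Ha; last by rewrite (count_memPn Ha) !mul0r.
rewrite Hz ?mulr0 // size_rem //.
by move: Hw; apply: contra => /eqP <-; case: (w) Ha.
Qed.

Lemma sum_count (w : wd) : \sum_(a : I) (count_mem a w)%:R = (size w)%:R :> k.
Proof.
elim: w => [|y w IH]; first by rewrite big1.
rewrite /= -nat1r -IH.
under eq_bigr => a _ do rewrite natrD.
rewrite big_split /=; congr (_ + _).
rewrite (bigD1 y) //= eqxx big1 ?addr0 // => a /negbTE Ha.
by rewrite eq_sym Ha.
Qed.

Lemma K3 n (x : sfun B d) : inBSn n.+1 x -> forall w,
  x w = \sum_(a : I) (n.+1)%:R^-1 * dotp (delta a) (fun u => x (a :: u)) w.
Proof.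
case=> Hs Hz w.
have Hsa : forall a : I, symm (fun u => x (a :: u)).
  by move=> a u u' Hp; apply: Hs; rewrite perm_cons.
transitivity (\sum_(a : I) (n.+1)%:R^-1 * ((count_mem a w)%:R * x w)); last first.
  apply: eq_bigr => a _; rewrite dotp_delta //; congr (_ * _).
  case: (boolP (a \in w)) => Ha; last by rewrite (count_memPn Ha) !mul0r.
  by congr (_ * _); apply: Hs; apply: perm_to_rem.
rewrite -mulr_sumr -mulr_suml sum_count.
case: (eqVneq (size w) n.+1) => Hw; last by rewrite Hz // !mulr0.
rewrite Hw mulrA mulVf ?mul1r //.
by move/pcharf0P: char0 => ->.
Qed.

Theorem Uthm n (x : sfun B d) : inBSn n x -> forall w1 w2, DD x w1 w2 = x (w1 ++ w2).
Proof.
case: (HD d) => H1 H2 H3 H4 H5.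
elim: n x => [|n IH] x Hx w1 w2.
  rewrite (@linE (x [::]) oneD (fun _ => 0) x inBS_one inBS0); last first.
    move=> w; rewrite addr0 /Defs.one; case: w => [|y w]; first by rewrite mulr1.
    by rewrite mulr0; case: Hx => _ ->.
  rewrite lin0 addr0 H4 /tens /Defs.one.
  case: w1 => [|y1 w1]; case: w2 => [|y2 w2] /=; rewrite ?mulr1 ?mulr0 ?mul0r //;
  by case: Hx => _ ->.
have Hxa : forall a : I, inBSn n (fun u => x (a :: u)).
  case: Hx => Hs Hz a; split.
    by move=> u u' Hp; apply: Hs; rewrite perm_cons.
  by move=> u Hu; apply: Hz.
have -> : x = fun w => \sum_(a <- index_enum I) (n.+1)%:R^-1 * dotp (delta a) (fun u => x (a :: u)) w.
  by apply: functional_extensionality => w; rewrite (K3 Hx).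
case: (lin_sum (index_enum I) (n.+1)%:R^-1 (fun a => inBSn_inBS (inBSn_dotp a (Hxa a)))) => _ ->.
apply: eq_bigr => a _; congr (_ * _).
rewrite H3; last by apply: inBSn_inBS (Hxa a).
  2: by apply: inBSn_inBS (inBSn_delta a).
have -> : DD (delta a) = fun u1 u2 => tens oneD (delta a) u1 u2 + tens (delta a) oneD u1 u2.
  by do 2 apply: functional_extensionality => ?; apply: H5; apply: inBSn_delta.
have -> : DD (fun u => x (a :: u)) = fun u1 u2 => x (a :: (u1 ++ u2)).
  by do 2 apply: functional_extensionality => ?; apply: IH.
rewrite (K2 (z := fun u => x (a :: u))); last by case: (Hxa a).
by rewrite dotp_delta //; case: (Hxa a).
Qed.
End U.
Section S.
Variables (k : fieldType) (B : gradedAlg k).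
Local Notation I d := ('I_(gdim B d)).

Definition starN e d n (x : sfun B e) (v : sfun B d) (w : word B (e + d)) : k :=
  \sum_(u : n.-tuple (I e)) \sum_(u' : n.-tuple (I d)) x u * v u' * coefprod u u' w.

Lemma starE e d (x : sfun B e) (v : sfun B d) w : star x v w = starN (size w) x v w.
Proof. by []. Qed.

Lemma coefprod_tnth e d N (u : N.-tuple (I e)) (u' : N.-tuple (I d)) (t : N.-tuple (I (e + d))) :
  coefprod u u' t = \prod_(i < N) gmul (tnth u i) (tnth u' i) (tnth t i).
Proof.
case: N u u' t => [|N] u u' t.
  by rewrite big_ord0 /coefprod (tuple0 u) (tuple0 u') (tuple0 t) /= big_nil.
rewrite /coefprod (big_nth ((tnth u ord0, tnth u' ord0), tnth t ord0)).
rewrite !size_zip !size_tuple !minnn big_mkord.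
apply: eq_bigr => i _.
rewrite nth_zip ?size_zip ?size_tuple ?minnn // nth_zip ?size_tuple //=.
by rewrite -!tnth_nth.
Qed.

Lemma coefprod_perm e d N (u : N.-tuple (I e)) (u' : N.-tuple (I d)) (t : N.-tuple (I (e + d)))
  (p : 'S_N) :
  coefprod [tuple tnth u (p i) | i < N] [tuple tnth u' (p i) | i < N] [tuple tnth t (p i) | i < N]
  = coefprod u u' t.
Proof.
rewrite !coefprod_tnth [RHS](reindex_inj (@perm_inj _ p)) /=.
by apply: eq_bigr => i _; rewrite !tnth_mktuple.
Qed.

Lemma perm_tuple_sym (T : eqType) N (f : seq T -> k) (p : 'S_N) (u : N.-tuple T) :
  (forall w w', perm_eq w w' -> f w = f w') -> f [tuple tnth u (p i) | i < N] = f u.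
Proof. by move=> H; apply: H; apply/tuple_permP; exists p. Qed.

Lemma starN_perm e d N (x : sfun B e) (v : sfun B d) (t : N.-tuple (I (e + d))) (p : 'S_N) :
  symm x -> symm v ->
  starN N x v [tuple tnth t (p i) | i < N] = starN N x v t.
Proof.
move=> Hx Hv; rewrite /starN.
have Hinj : forall T, injective (fun u : N.-tuple T => [tuple tnth u (p i) | i < N]).
  move=> T u1 u2 H; apply: eq_from_tnth => j.
  have := congr1 (fun u => tnth u (p^-1 j)%g) H; rewrite /= !tnth_mktuple.
  by rewrite permKV.
rewrite [LHS](reindex_inj (Hinj _)) /=; apply: eq_bigr => u _.
rewrite [LHS](reindex_inj (Hinj _)) /=; apply: eq_bigr => u' _.
by rewrite coefprod_perm (perm_tuple_sym _ _ Hx) (perm_tuple_sym _ _ Hv).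
Qed.

Lemma star_symm e d (x : sfun B e) (v : sfun B d) : symm x -> symm v -> symm (star x v).
Proof.
move=> Hx Hv w w' Hp.
have Hs : size w' == size w by rewrite (perm_size Hp).
pose t' : (size w).-tuple _ := Tuple Hs.
have : perm_eq t' (in_tuple w) by rewrite perm_sym.
case/tuple_permP => p Ht.
rewrite !starE -(perm_size Hp).
have -> : starN (size w) x v w' = starN (size w) x v t' by [].
by rewrite Ht starN_perm.
Qed.

Lemma star_inBSn e d n (x : sfun B e) (v : sfun B d) : inBSn n x -> inBSn n v -> inBSn n (star x v).
Proof.
case=> Hx Hx0 [Hv Hv0]; split; first exact: star_symm.
move=> w Hw; rewrite /star big1 // => u _; rewrite big1 // => u' _.
by rewrite Hx0 ?mul0r // size_tuple.
Qed.

End S.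
Section Split.
Variable (k : fieldType).

Lemma ttakeP (T : Type) n1 n2 (u : (n1 + n2).-tuple T) : size (take n1 u) == n1.
Proof. by rewrite size_takel // size_tuple leq_addr. Qed.
Lemma tdropP (T : Type) n1 n2 (u : (n1 + n2).-tuple T) : size (drop n1 u) == n2.
Proof. by rewrite size_drop size_tuple addKn. Qed.

Lemma sum_tuple_cat (T : finType) n1 n2 (F : seq T -> k) :
  \sum_(u : (n1 + n2).-tuple T) F u
  = \sum_(u1 : n1.-tuple T) \sum_(u2 : n2.-tuple T) F (u1 ++ u2).
Proof.
rewrite pair_big /=.
rewrite (reindex (fun p : n1.-tuple T * n2.-tuple T => cat_tuple p.1 p.2)) //=.
exists (fun u => (Tuple (ttakeP u), Tuple (tdropP u))).
  move=> [u1 u2] _ /=; congr (_, _); apply: val_inj => /=.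
    by rewrite take_size_cat // size_tuple.
  by rewrite drop_size_cat // size_tuple.
by move=> u _; apply: val_inj => /=; rewrite cat_take_drop.
Qed.

Lemma coefprod_cat (B : gradedAlg k) e d (u1 u2 : word B e) (u1' u2' : word B d) (w1 w2 : word B (e + d)) :
  size u1 = size w1 -> size u1' = size w1 ->
  coefprod (u1 ++ u2) (u1' ++ u2') (w1 ++ w2) = coefprod u1 u1' w1 * coefprod u2 u2' w2.
Proof.
move=> H1 H2; rewrite /coefprod zip_cat; last by rewrite H1 H2.
rewrite zip_cat ?big_cat //.
by rewrite size_zip H1 H2 minnn.
Qed.

End Split.

Section Final.
Variables (k : fieldType) (B : gradedAlg k) (e d : nat).

Lemma star_cat (x : sfun B e) (v : sfun B d) (w1 w2 : word B (e + d)) :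
  star x v (w1 ++ w2) = star2 (fun a b => x (a ++ b)) (fun a b => v (a ++ b)) w1 w2.
Proof.
rewrite starE size_cat /starN /star2.
rewrite (@sum_tuple_cat _ _ (size w1) (size w2) (fun s => \sum_(u' : (size w1 + size w2).-tuple _) x s * v u' * coefprod s u' (w1 ++ w2))).
apply: eq_bigr => u1 _.
transitivity (\sum_(u2 : (size w2).-tuple _) \sum_(u1' : (size w1).-tuple 'I_(gdim B d)) \sum_(u2' : (size w2).-tuple 'I_(gdim B d))
   x (u1 ++ u2) * v (u1' ++ u2') * coefprod (u1 ++ u2) (u1' ++ u2') (w1 ++ w2)).
  apply: eq_bigr => u2 _.
  by rewrite (@sum_tuple_cat _ _ (size w1) (size w2) (fun s => x (u1 ++ u2) * v s * coefprod (u1 ++ u2) s (w1 ++ w2))).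
rewrite exchange_big /=; apply: eq_bigr => u1' _.
apply: eq_bigr => u2 _; apply: eq_bigr => u2' _.
rewrite coefprod_cat ?size_tuple //.
by rewrite !mulrA.
Qed.
End Final.

Theorem lemma3p4 (k : fieldType) (char0 : [pchar k] =i pred0)
  (B : gradedAlg k) (HB : std_graded B)
  (D : forall d, sfun B d -> sfun2 B d) (HD : is_Delta D)
  (e d n m : nat) (x : sfun B e) (y v : sfun B d) :
  inBSn n x -> inBSn m y -> inBSn n v ->
  (forall w1 w2, D d (dotp y v) w1 w2 = dotp2 (D d y) (D d v) w1 w2) /\
  (forall w1 w2, D (e + d)%N (star x v) w1 w2 = star2 (D e x) (D d v) w1 w2).
Proof.
move=> Hx Hy Hv; split.
  move=> w1 w2; case: (HD d) => _ _ H3 _ _.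
  by apply: H3; apply: inBSn_inBS; eassumption.
move=> w1 w2.
rewrite (Uthm char0 HD (star_inBSn Hx Hv)).
have -> : D e x = fun a b => x (a ++ b).
  by do 2 apply: functional_extensionality => ?; apply: (Uthm char0 HD Hx).
have -> : D d v = fun a b => v (a ++ b).
  by do 2 apply: functional_extensionality => ?; apply: (Uthm char0 HD Hv).
exact: star_cat.
Qed.
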